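(* Let $p\ge 2$ be an integer and $\omega\ge1$ real, and let $k=\lfloor\log_p((p-1)\omega+1)\rfloor-1$. Then the minimal real resolution of $\omega$ is $$\widetilde\gamma_i(\omega)=p^{-i}\,\frac{p-1}{p-p^{-k}}\,\omega\quad(0\le i\le k),\qquad \widetilde\gamma_i(\omega)=0\quad(i>k).$$
   Context: A real resolution of $\omega$ is a sequence $(\gamma_i)_{i\ge0}$ with values in $\{0\}\cup[1,\infty)$ such that $\gamma_i\ge p\gamma_{i+1}$ for all $i$ and $\sum_{i\ge0}\gamma_i=\omega$. The minimal real resolution $(\widetilde\gamma_i(\omega))_{i\ge0}$ is the lexicographically smallest real resolution of $\omega$ (compared at the first index where two sequences differ). *)

(* Defs.v *)
From Stdlib Require Import Reals Lra Lia.
Open Scope R_scope.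

Definition real_resolution (p : nat) (omega : R) (g : nat -> R) : Prop :=
  (forall i, g i = 0 \/ 1 <= g i) /\
  (forall i, INR p * g (S i) <= g i) /\
  infinite_sum g omega.

Definition lex_lt (g h : nat -> R) : Prop :=
  exists n, (forall i, (i < n)%nat -> g i = h i) /\ g n < h n.

Definition minimal_real_resolution (p : nat) (omega : R) (g : nat -> R) : Prop :=
  real_resolution p omega g /\
  forall h, real_resolution p omega h -> g = h \/ lex_lt g h.

(* floor of log_p x, via Stdlib's Int_part (= floor). *)
Definition floor_log (p : nat) (x : R) : Z := Int_part (ln x / ln (INR p)).

(* Main.v *)
Require Import Defs.
From Stdlib Require Import Reals Lra Lia Classical FunctionalExtensionality.
Open Scope R_scope.

Lemma sum_stable (f : nat -> R) (K : nat) :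
  (forall i, (K < i)%nat -> f i = 0) -> forall d, sum_f_R0 f (K + d) = sum_f_R0 f K.
Proof.
  intros Hf d; induction d as [|d IH].
  - now rewrite Nat.add_0_r.
  - rewrite Nat.add_succ_r; simpl; rewrite IH, Hf by lia; ring.
Qed.

Lemma sum_cv (f : nat -> R) (K : nat) :
  (forall i, (K < i)%nat -> f i = 0) -> Un_cv (sum_f_R0 f) (sum_f_R0 f K).
Proof.
  intros Hf e He; exists K; intros n Hn.
  replace n with (K + (n - K))%nat by lia.
  rewrite sum_stable by auto. unfold R_dist; rewrite Rminus_diag, Rabs_R0; lra.
Qed.

Lemma sum_pos_strict (D : nat -> R) (n N : nat) :
  (forall i, (i <= N)%nat -> 0 <= D i) -> (n <= N)%nat -> 0 < D n -> 0 < sum_f_R0 D N.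
Proof.
  intros H Hn Hd; induction N as [|N IH].
  - assert (n = 0%nat) by lia; subst n; simpl; lra.
  - simpl. destruct (Nat.eq_dec n (S N)) as [->|Hne].
    + assert (0 <= sum_f_R0 D N).
      { clear IH Hn Hd. induction N as [|N IH2]; simpl.
        - apply H; lia.
        - assert (0 <= D (S N)) by (apply H; lia).
          assert (0 <= sum_f_R0 D N) by (apply IH2; intros; apply H; lia). lra. } lra.
    + assert (0 < sum_f_R0 D N) by (apply IH; [intros; apply H; lia | lia]).
      assert (0 <= D (S N)) by (apply H; lia). lra.
Qed.

Lemma least_ex (Pr : nat -> Prop) :
  (exists n, Pr n) -> exists n, Pr n /\ forall i, (i < n)%nat -> ~ Pr i.
Proof.
  intros [n Hn]. revert Hn. induction n as [n IH] using (well_founded_induction Wf_nat.lt_wf); intros Hn.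
  destruct (classic (exists i, (i < n)%nat /\ Pr i)) as [[i [Hi Pi]]|Hno].
  - exact (IH i Hi Pi).
  - exists n; split; auto. intros i Hi Pi; apply Hno; eauto.
Qed.

Section H.
Variable P : R.
Hypothesis HP : 2 <= P.
Variable h : nat -> R.
Hypothesis Hv : forall i, h i = 0 \/ 1 <= h i.
Hypothesis Hd : forall i, P * h (S i) <= h i.

Lemma h_nonneg i : 0 <= h i.
Proof. destruct (Hv i); lra. Qed.

Lemma h_chain d i : P ^ d * h (i + d)%nat <= h i.
Proof.
  induction d as [|d IH].
  - rewrite Nat.add_0_r; simpl; lra.
  - rewrite Nat.add_succ_r. simpl.
    assert (P * h (S (i + d)) <= h (i + d)%nat) by apply Hd.
    assert (0 < P ^ d) by (apply pow_lt; lra).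
    assert (P ^ d * (P * h (S (i + d))) <= P ^ d * h (i + d)%nat)
      by (apply Rmult_le_compat_l; lra).
    nra.
Qed.

Lemma h_lower n x : x <= h n -> x * (P ^ S n - 1) / (P - 1) <= sum_f_R0 h n.
Proof.
  revert x; induction n as [|n IH]; intros x Hx.
  - simpl. replace (x * (P * 1 - 1) / (P - 1)) with x by (field; lra). lra.
  - simpl sum_f_R0.
    assert (P * x <= h n) by (pose proof (Hd n); nra).
    specialize (IH _ H).
    replace (x * (P ^ S (S n) - 1) / (P - 1))
      with (P * x * (P ^ S n - 1) / (P - 1) + x) by (simpl; field; lra).
    lra.
Qed.
End H.

Theorem mainTheorem7 (p : nat) (omega : R) (k : Z) :
  (2 <= p)%nat -> 1 <= omega ->
  k = (floor_log p ((INR p - 1) * omega + 1) - 1)%Z ->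
  minimal_real_resolution p omega
    (fun i : nat =>
       if (Z.of_nat i <=? k)%Z
       then / (INR p ^ i) * ((INR p - 1) / (INR p - / (INR p ^ Z.to_nat k))) * omega
       else 0).
Proof.
  intros Hp Hw Hk.
  set (P := INR p).
  assert (HP : 2 <= P) by (unfold P; apply (le_INR 2); lia).
  set (x := (P - 1) * omega + 1).
  assert (Hx : P <= x) by (unfold x; nra).
  assert (HlnP : 0 < ln P) by (rewrite <- ln_1; apply ln_increasing; lra).
  unfold floor_log in Hk; fold P in Hk; fold x in Hk.
  set (r := ln x / ln P) in Hk.
  destruct (base_Int_part r) as [Hr1 Hr2].
  assert (Hr : 1 <= r).
  { unfold r. apply (Rmult_le_reg_r (ln P)); auto.
    unfold Rdiv; rewrite Rmult_assoc, Rinv_l, Rmult_1_r by lra.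
    destruct (Req_dec P x) as [E|Hne]; [rewrite E; lra|].
    rewrite Rmult_1_l; left; apply ln_increasing; lra. }
  set (m := Int_part r) in *.
  assert (Hm : (1 <= m)%Z).
  { destruct (Z.lt_ge_cases m 1) as [Hl|]; [|lia].
    assert (Hl' : (m <= 0)%Z) by lia. apply IZR_le in Hl'. lra. }
  set (K := Z.to_nat k).
  assert (HkK : k = Z.of_nat K) by (unfold K; lia).
  assert (HmK : IZR m = INR (S K)).
  { rewrite INR_IZR_INZ. f_equal. lia. }
  assert (HA : P ^ S K <= x).
  { destruct (Rle_lt_dec (P ^ S K) x) as [|Hl]; auto.
    apply ln_increasing in Hl; [|lra].
    rewrite ln_pow in Hl by lra.
    assert (INR (S K) <= r) by lra.
    unfold r in H. apply (Rmult_le_compat_r (ln P)) in H; [|lra].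
    unfold Rdiv in H; rewrite Rmult_assoc, Rinv_l, Rmult_1_r in H by lra. lra. }
  assert (HB : x < P ^ S (S K)).
  { assert (r < INR (S (S K))) by (rewrite S_INR, <- HmK; lra).
    apply ln_lt_inv; [lra| apply pow_lt; lra |].
    rewrite ln_pow by lra.
    unfold r in H. apply (Rmult_lt_compat_r (ln P)) in H; [|lra].
    unfold Rdiv in H; rewrite Rmult_assoc, Rinv_l, Rmult_1_r in H by lra. lra. }
  clearbody m r.
  fold K.
  set (C := (P - 1) / (P - / P ^ K) * omega).
  assert (HPK : 1 <= P ^ K) by (apply pow_R1_Rle; lra).
  assert (HC : 0 < C).
  { unfold C. apply Rmult_lt_0_compat; [|lra]. apply Rdiv_lt_0_compat; [lra|].
    assert (/ P ^ K <= 1) by (rewrite <- Rinv_1; apply Rinv_le_contravar; lra). lra. }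
  set (g := fun i : nat => if (i <=? K)%nat then / P ^ i * C else 0).
  assert (Hg : (fun i : nat =>
       if (Z.of_nat i <=? k)%Z
       then / (P ^ i) * ((P - 1) / (P - / (P ^ K))) * omega
       else 0) = g).
  { apply functional_extensionality; intro i. unfold g, C.
    rewrite HkK. destruct (Nat.leb_spec i K), (Z.leb_spec (Z.of_nat i) (Z.of_nat K));
      try lia; ring. }
  rewrite Hg. clear Hg.
  assert (HgK : 1 <= / P ^ K * C).
  { unfold C. simpl in HA. unfold x in HA.
    replace (/ P ^ K * ((P - 1) / (P - / P ^ K) * omega))
      with ((P - 1) * omega / (P * P ^ K - 1)) by (field; split; nra).
    apply (Rmult_le_reg_r (P * P ^ K - 1)); [nra|].
    unfold Rdiv; rewrite Rmult_assoc, Rinv_l, Rmult_1_r by nra. lra. }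
  assert (Hg0 : forall i, (K < i)%nat -> g i = 0).
  { intros i Hi; unfold g; destruct (Nat.leb_spec i K); lia || reflexivity. }
  assert (Hgrel : forall n i, (n <= i)%nat -> (i <= K)%nat -> g n = P ^ (i - n) * g i).
  { intros n i H1 H2. unfold g. destruct (Nat.leb_spec n K), (Nat.leb_spec i K); try lia.
    replace i with ((i - n) + n)%nat at 2 by lia. rewrite pow_add.
    assert (0 < P ^ (i - n)) by (apply pow_lt; lra).
    assert (0 < P ^ n) by (apply pow_lt; lra). field; lra. }
  assert (Hsum : sum_f_R0 g K = omega).
  { rewrite (sum_eq g (fun i => (/ P) ^ i * C)).
    2:{ intros i Hi. unfold g. destruct (Nat.leb_spec i K); try lia. now rewrite pow_inv. }
    rewrite <- scal_sum, tech3 by (intro E; assert (P * / P = 1) by (field; lra);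
        rewrite E in H; lra).
    unfold C. rewrite pow_inv. simpl.
    assert (0 < P ^ K) by lra. field. repeat split; nra. }
  assert (Hres : real_resolution p omega g).
  { split; [|split].
    - intro i. unfold g. destruct (Nat.leb_spec i K); [right|left; reflexivity].
      assert (/ P ^ K <= / P ^ i).
      { apply Rinv_le_contravar; [apply pow_lt; lra| apply Rle_pow; lra || lia]. }
      nra.
    - intro i. fold P. destruct (Nat.leb_spec (S i) K).
      + rewrite (Hgrel i (S i)) by lia. replace (S i - i)%nat with 1%nat by lia. simpl; lra.
      + rewrite Hg0 by lia. unfold g. destruct (Nat.leb_spec i K).
        * assert (0 < / P ^ i) by (apply Rinv_0_lt_compat, pow_lt; lra). nra.
        * lra.
    - unfold infinite_sum. rewrite <- Hsum. apply sum_cv; auto. }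
  split; auto.
  intros h [Hv [Hd Hs]]. fold P in Hd.
  assert (Hh0 : forall j, (K < j)%nat -> h j = 0).
  { intros j Hj. destruct (Hv j) as [|H1]; auto. exfalso.
    pose proof (h_lower P HP h Hd j 1 H1) as L.
    assert (Hgr : Un_growing (sum_f_R0 h)).
    { intro n. simpl. pose proof (h_nonneg h Hv (S n)). lra. }
    pose proof (growing_ineq _ _ Hgr Hs j).
    assert (P ^ S (S K) <= P ^ S j) by (apply Rle_pow; lra || lia).
    assert (1 * (P ^ S j - 1) / (P - 1) >= (P ^ S (S K) - 1) / (P - 1)).
    { unfold Rdiv. apply Rle_ge, Rmult_le_compat_r; [left; apply Rinv_0_lt_compat; lra| lra]. }
    assert ((P ^ S (S K) - 1) / (P - 1) > omega).
    { apply Rlt_gt. apply (Rmult_lt_reg_r (P - 1)); [lra|].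
      unfold Rdiv; rewrite Rmult_assoc, Rinv_l, Rmult_1_r by lra. unfold x in HB. lra. }
    lra. }
  assert (HsumH : sum_f_R0 h K = omega).
  { apply (UL_sequence (sum_f_R0 h)); auto. apply sum_cv; auto. }
  destruct (classic (forall i, g i = h i)) as [Hall|Hnot].
  { left; apply functional_extensionality; auto. }
  right.
  destruct (least_ex (fun i => g i <> h i)) as [n [Hn Hlt]].
  { apply not_all_ex_not in Hnot; auto. }
  exists n. split.
  { intros i Hi. apply NNPP. apply Hlt; auto. }
  destruct (Nat.leb_spec n K) as [HnK|HnK].
  2:{ pose proof (Hg0 n ltac:(lia)) as E0. rewrite E0 in *. destruct (Hv n) as [E1|]; [rewrite E1 in Hn; lra|lra]. }
  destruct (Rlt_le_dec (g n) (h n)) as [|Hle]; auto. exfalso.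
  assert (Hltn : h n < g n) by lra.
  assert (0 < sum_f_R0 (fun i => g i - h i) K).
  { apply (sum_pos_strict _ n); auto; [|lra].
    intros i Hi. destruct (Nat.le_gt_cases n i) as [Hni|Hni].
    - pose proof (h_chain P HP h Hd (i - n) n) as Hc.
      replace (n + (i - n))%nat with i in Hc by lia.
      rewrite (Hgrel n i) in Hltn by lia.
      assert (0 < P ^ (i - n)) by (apply pow_lt; lra).
      assert (P ^ (i - n) * h i < P ^ (i - n) * g i) by lra.
      apply Rmult_lt_reg_l in H0; auto. lra.
    - assert (g i = h i) by (apply NNPP, Hlt; auto). lra. }
  rewrite minus_sum, Hsum, HsumH in H. lra.
Qed.
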